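(* If $f(z)=z+\sum_{n=2}^\infty a_nz^n\in\mathcal{S}^*_{nc}$, then $$\sum_{n=2}^\infty (n^2k_1-4)|a_n|^2\le 4-k_1,\qquad\text{where } k_1=\cos^2 1.$$
   Context: $\mathbb{D}$ is the open unit disk. $\mathcal{A}$ is the class of analytic $f$ on $\mathbb{D}$ with $f(0)=0$, $f'(0)=1$. For analytic $f,g$ on $\mathbb{D}$, $f\prec g$ means $f=g\circ\omega$ for some analytic $\omega:\mathbb{D}\to\mathbb{D}$ with $\omega(0)=0$. $\mathcal{S}^*_{nc}=\{f\in\mathcal{A}: zf'(z)/f(z)\prec (1+z)/\cos z\}$. *)

(* Defs.v *)
From Stdlib Require Import Reals.
From Coquelicot Require Import Coquelicot.
Open Scope R_scope.

Definition inD (z : C) : Prop := Cmod z < 1.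

Definition holo_on_D (f : C -> C) : Prop :=
  forall z : C, inD z -> ex_derive f z.

Definition classA (f : C -> C) : Prop :=
  holo_on_D f /\ f 0%C = 0%C /\ C_derive f 0%C = 1%C.

Definition subordinate (f g : C -> C) : Prop :=
  holo_on_D f /\ holo_on_D g /\
  exists w : C -> C, holo_on_D w /\ w 0%C = 0%C /\
    (forall z, inD z -> inD (w z)) /\
    (forall z, inD z -> f z = g (w z)).

(* complex cosine: cos(x+iy) = cos x cosh y - i sin x sinh y *)
Definition Ccos (z : C) : C :=
  (cos (Re z) * cosh (Im z), - (sin (Re z) * sinh (Im z))).

Definition starQ (f : C -> C) (z : C) : C :=
  if Req_EM_T (Cmod z) 0 then 1%C else (z * C_derive f z / f z)%C.

Definition nc_fun (z : C) : C := ((1 + z) / Ccos z)%C.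

(* S*_nc; membership presupposes f(z) <> 0 for z <> 0 so that z f'/f is defined *)
Definition S_star_nc (f : C -> C) : Prop :=
  classA f /\ (forall z, inD z -> z <> 0%C -> f z <> 0%C) /\
  subordinate (starQ f) nc_fun.

(* Main.v *)
Require Import Defs.
From Stdlib Require Import Reals Lra Lia.
From Coquelicot Require Import Coquelicot.
Open Scope R_scope.

Lemma bernoulli : forall x n, 0 <= x -> 1 + INR n * x <= (1 + x) ^ n.
Proof.
  intros x n Hx. induction n.
  - simpl. lra.
  - rewrite S_INR. simpl.
    assert (0 <= INR n) by apply pos_INR.
    assert (0 <= INR n * x * x) by (apply Rmult_le_pos; [apply Rmult_le_pos|]; lra).
    nra.
Qed.

Lemma poly_geom : forall q, 0 <= q < 1 -> exists K t, 0 <= K /\ 0 <= t < 1 /\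
  forall n, (INR n + 1)^2 * q^n <= K * t^n.
Proof.
  intros q Hq.
  set (e := (1 - q)/3).
  assert (He : 0 < e <= 1/3) by (unfold e; lra).
  exists (/ (e*e)), ((1+e)^2 * q). split; [|split; [split|]].
  - left. apply Rinv_0_lt_compat. nra.
  - apply Rmult_le_pos; [apply pow2_ge_0| lra].
  - assert (q = 1 - 3*e) by (unfold e; lra). nra.
  - intro n.
    assert (Hb := bernoulli e n (proj1 (conj (Rlt_le _ _ (proj1 He)) I))).
    assert (H1 : INR n + 1 <= (1+e)^n / e).
    { apply Rmult_le_reg_r with e; [lra|].
      unfold Rdiv. rewrite Rmult_assoc, Rinv_l by lra.
      assert (0 <= INR n) by apply pos_INR. nra. }
    assert (H0 : 0 <= INR n + 1) by (generalize (pos_INR n); lra).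
    assert (H2 : (INR n + 1)^2 <= ((1+e)^n / e)^2).
    { simpl. apply Rmult_le_compat; lra. }
    rewrite Rpow_mult_distr, <- pow_mult.
    replace ((1+e)^(2*n)) with (((1+e)^n)^2) by (rewrite <- pow_mult; f_equal; lia).
    assert (0 <= q^n) by (apply pow_le; lra).
    replace (/ (e*e) * (((1 + e) ^ n) ^ 2 * q ^ n)) with ((((1 + e) ^ n) / e) ^ 2 * q^n)
      by (field; lra).
    apply Rmult_le_compat_r; auto.
Qed.

Lemma pow_le1 : forall r k, 0 <= r <= 1 -> r^k <= 1.
Proof.
  intros r k Hr. induction k; simpl. lra.
  assert (0 <= r^k) by (apply pow_le; lra). nra.
Qed.

Lemma one_minus_pow : forall r k, 0 <= r <= 1 -> 1 - r^k <= INR k * (1 - r).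
Proof.
  intros r k Hr. induction k.
  - simpl. lra.
  - rewrite S_INR. simpl.
    assert (0 <= r^k <= 1) by (split; [apply pow_le; lra| apply pow_le1; lra]).
    nra.
Qed.

Lemma sum_le_single : forall (x : nat -> R) n N, (forall k, 0 <= x k) -> (n <= N)%nat ->
  x n <= sum_n x N.
Proof.
  intros x n N Hx Hn. induction N.
  - replace n with 0%nat by lia. rewrite sum_O. lra.
  - destruct (Nat.eq_dec n (S N)) as [->|Hne].
    + rewrite sum_Sn. unfold plus; simpl.
      assert (0 <= sum_n x N).
      { clear IHN Hn. induction N. rewrite sum_O; auto. rewrite sum_Sn. unfold plus; simpl.
        specialize (Hx (S N)). lra. }
      lra.
    + rewrite sum_Sn. unfold plus; simpl. specialize (IHN ltac:(lia)). specialize (Hx (S N)). lra.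
Qed.

Lemma norm_sum_le : forall (e : nat -> C) (b : nat -> R) N,
  (forall n, Cmod (e n) <= b n) -> Cmod (sum_n e N) <= sum_n b N.
Proof.
  intros e b N H. induction N.
  - rewrite !sum_O. auto.
  - rewrite !sum_Sn. eapply Rle_trans. apply Cmod_triangle.
    unfold plus; simpl. specialize (H (S N)). lra.
Qed.

Lemma ev_norm_C : forall (u : nat -> C) l, filterlim u eventually (locally l) ->
  forall eps, 0 < eps -> exists N, forall n, (N <= n)%nat -> Cmod (u n - l)%C < eps.
Proof.
  intros u l H eps He.
  assert (Hl : locally l (ball_norm l (mkposreal eps He))).
  { exact (locally_le_locally_norm l _ (locally_norm_ball_norm l (mkposreal eps He))). }
  destruct (H _ Hl) as [N HN]. exists N. intros n Hn.
  specialize (HN n Hn). unfold ball_norm in HN. simpl in HN.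
  exact HN.
Qed.

Lemma ev_norm_R : forall (u : nat -> R) l, filterlim u eventually (locally l) ->
  forall eps, 0 < eps -> exists N, forall n, (N <= n)%nat -> Rabs (u n - l) < eps.
Proof.
  intros u l H eps He.
  assert (Hl : locally l (ball_norm l (mkposreal eps He))).
  { exact (locally_le_locally_norm l _ (locally_norm_ball_norm l (mkposreal eps He))). }
  destruct (H _ Hl) as [N HN]. exists N. intros n Hn.
  specialize (HN n Hn). unfold ball_norm in HN. simpl in HN. exact HN.
Qed.

Lemma series_bounded : forall (a : nat -> C) l, is_series a l ->
  exists B, forall n, Cmod (a n) <= B.
Proof.
  intros a l H.
  destruct (ev_norm_C _ _ H 1 Rlt_0_1) as [N HN].
  exists (2 + sum_n (fun k => Cmod (a k)) N).
  intro n.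
  assert (Hs : 0 <= sum_n (fun k => Cmod (a k)) N).
  { apply Rle_trans with (Cmod (a 0%nat)). apply Cmod_ge_0.
    apply (sum_le_single (fun k => Cmod (a k))). intros; apply Cmod_ge_0. lia. }
  destruct (Compare_dec.le_lt_dec n N) as [Hn|Hn].
  - assert (Cmod (a n) <= sum_n (fun k => Cmod (a k)) N).
    { apply (sum_le_single (fun k => Cmod (a k))). intros; apply Cmod_ge_0. lia. }
    lra.
  - destruct n as [|m]; [lia|].
    assert (E : a (S m) = ((sum_n a (S m) - l) - (sum_n a m - l))%C).
    { rewrite sum_Sn. unfold plus; simpl. ring. }
    rewrite E. eapply Rle_trans. 
    apply Cmod_triangle. rewrite Cmod_opp.
    assert (H1 := HN (S m) ltac:(lia)). assert (H2 := HN m ltac:(lia)).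
    eapply Rle_trans; [apply Rplus_le_compat; [apply Rlt_le, H1 | apply Rlt_le, H2] | lra].
Qed.

Lemma series_norm_le : forall (e : nat -> C) (b : nat -> R) L S,
  is_series e L -> is_series b S -> (forall n, Cmod (e n) <= b n) -> Cmod L <= S.
Proof.
  intros e b L S He Hb H.
  apply Rnot_lt_le. intro Hlt.
  set (eps := (Cmod L - S)/3).
  assert (Heps : 0 < eps) by (unfold eps; lra).
  destruct (ev_norm_C _ _ He eps Heps) as [N1 H1].
  destruct (ev_norm_R _ _ Hb eps Heps) as [N2 H2].
  set (n := max N1 N2).
  specialize (H1 n ltac:(unfold n; lia)). specialize (H2 n ltac:(unfold n; lia)).
  assert (H3 := norm_sum_le e b n H).
  assert (H4 : Cmod L <= Cmod (sum_n e n) + Cmod (sum_n e n - L)%C).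
  { replace L with (sum_n e n - (sum_n e n - L))%C at 1 by ring.
    eapply Rle_trans. apply Cmod_triangle. rewrite Cmod_opp. lra. }
  change (@sum_n (NormedModule.AbelianMonoid C_AbsRing C_NormedModule)) with (@sum_n C_AbelianMonoid) in H1.
  change (@sum_n (NormedModule.AbelianMonoid R_AbsRing R_NormedModule)) with (@sum_n R_AbelianMonoid) in H2.
  apply Rabs_def2 in H2. unfold eps in *. lra.
Qed.

Lemma cos1_ge_half : 1/2 <= cos 1.
Proof.
  assert (H := COS 1).
  assert (H1 : - PI/2 <= 1) by (generalize PI2_1; lra).
  assert (H2 : 1 <= PI/2) by (generalize PI2_1; lra).
  destruct (H H1 H2) as [Hl _].
  replace (cos_lb 1) with (389/720) in Hl.
  lra. unfold cos_lb, cos_approx, cos_term. simpl. field.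
Qed.

Lemma cos1_pos : 0 < cos 1.
Proof. generalize cos1_ge_half; lra. Qed.

Lemma cosh_ge_1 : forall y, 1 <= cosh y.
Proof.
  intro y. unfold cosh. rewrite exp_Ropp.
  assert (He := exp_pos y). set (e := exp y) in *.
  assert (e + / e >= 2).
  { assert (e * (e + / e) = e*e + 1) by (field; lra).
    assert ((e-1)^2 >= 0) by (apply Rle_ge, pow2_ge_0).
    nra. }
  lra.
Qed.

Lemma ccos_lb : forall u : C, Cmod u < 1 -> cos 1 <= Cmod (Ccos u).
Proof.
  intros u Hu.
  eapply Rle_trans; [| apply re_le_Cmod].
  unfold Ccos; simpl.
  assert (Hx : Rabs (fst u) < 1).
  { eapply Rle_lt_trans; [| exact Hu]. apply (re_le_Cmod u). }
  assert (Hc : cos 1 <= cos (Rabs (fst u))).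
  { apply cos_decr_1; try lra; try apply Rabs_pos.
    generalize PI2_1; lra. generalize PI2_1; lra. }
  assert (Hc' : cos (Rabs (fst u)) = Rabs (cos (fst u))).
  { assert (Hx2 := Rabs_def2 _ _ Hx).
    unfold Rabs at 1. destruct (Rcase_abs (fst u)).
    rewrite cos_neg. rewrite Rabs_pos_eq; auto.
    apply cos_ge_0; generalize PI2_1; lra.
    rewrite Rabs_pos_eq; auto.
    apply cos_ge_0; generalize PI2_1; lra. }
  rewrite Rabs_mult. rewrite (Rabs_pos_eq (cosh _)).
  2: { generalize (cosh_ge_1 (Im u)). intros. lra. }
  rewrite Hc' in Hc. generalize (cosh_ge_1 (Im u)) cos1_pos (Rabs_pos (cos (Re u))). unfold Re, Im in *. nra.
Qed.

Lemma nc_bound : forall u : C, Cmod u < 1 -> Cmod (nc_fun u) <= 2 / cos 1.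
Proof.
  intros u Hu. unfold nc_fun.
  assert (Hl := ccos_lb u Hu). assert (Hp := cos1_pos).
  assert (Hnz : Ccos u <> 0%C).
  { intro E. rewrite E, Cmod_0 in Hl. lra. }
  rewrite Cmod_div by exact Hnz.
  assert (Cmod (1 + u) <= 2).
  { eapply Rle_trans. apply Cmod_triangle. rewrite Cmod_1. lra. }
  unfold Rdiv. apply Rmult_le_compat; auto using Cmod_ge_0.
  left; apply Rinv_0_lt_compat; lra.
  apply Rinv_le_contravar; lra.
Qed.

Lemma zf_bound : forall f, S_star_nc f -> forall z, inD z -> z <> 0%C ->
  Cmod (z * C_derive f z) <= (2 / cos 1) * Cmod (f z).
Proof.
  intros f [HA [Hnz [_ [_ [w [_ [_ [Hw Heq]]]]]]]] z Hz Hz0.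
  specialize (Heq z Hz). unfold starQ in Heq.
  destruct (Req_EM_T (Cmod z) 0) as [E|_].
  { exfalso. apply Hz0. now apply Cmod_eq_0. }
  assert (Hf := Hnz z Hz Hz0).
  assert (Hb := nc_bound (w z) (Hw z Hz)). rewrite <- Heq in Hb.
  rewrite Cmod_div in Hb by exact Hf.
  assert (0 < Cmod (f z)) by (apply Cmod_gt_0; exact Hf).
  unfold Rdiv in Hb.
  apply Rmult_le_compat_r with (r := Cmod (f z)) in Hb; [|lra].
  rewrite Rmult_assoc, Rinv_l in Hb by lra. lra.
Qed.

Definition cf (a : nat -> C) (n : nat) : C :=
  match n with 0 => 0%C | 1 => 1%C | S (S k) => a (S (S k)) end.

Lemma f_series : forall (f : C -> C) (a : nat -> C),
  (forall z : C, inD z ->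
     is_series (fun n : nat => (a (n + 2)%nat * z ^ (n + 2))%C) (f z - z)%C) ->
  forall z, inD z -> is_series (fun n => (cf a n * z ^ n)%C) (f z).
Proof.
  intros f a H z Hz.
  apply is_series_decr_1. apply is_series_decr_1.
  match goal with |- is_series _ ?l => replace l with (f z - z)%C end.
  2: { unfold plus, opp; simpl. ring. }
  eapply is_series_ext; [| exact (H z Hz)].
  intro n. simpl. replace (n+2)%nat with (S (S n)) by lia. reflexivity.
Qed.

Lemma coef_bound : forall (f : C -> C) (a : nat -> C),
  (forall z, inD z -> is_series (fun n => (cf a n * z ^ n)%C) (f z)) ->
  forall rho, 0 <= rho < 1 -> exists B, forall n, Cmod (cf a n) * rho ^ n <= B.
Proof.
  intros f a H rho Hr.
  assert (Hz : inD (RtoC rho)).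
  { unfold inD. rewrite Cmod_R, Rabs_pos_eq; lra. }
  destruct (series_bounded _ _ (H _ Hz)) as [B HB].
  exists B. intro n. specialize (HB n).
  rewrite Cmod_mult, Cmod_pow, Cmod_R, Rabs_pos_eq in HB by lra. exact HB.
Qed.

Definition Ed (y z : C) (m : nat) : C :=
  (y ^ m - z ^ m - INR m * z ^ (pred m) * (y - z))%C.

Lemma Ed_rec : forall y z m,
  Ed y z (S m) = (y * Ed y z m + INR m * z ^ (pred m) * (y - z) ^ 2)%C.
Proof.
  intros y z m. unfold Ed.
  destruct m as [|k].
  - simpl. ring.
  - simpl pred. simpl Cpow. set (X := RtoC (INR (S k))).
    replace (RtoC (INR (S (S k)))) with (X + 1)%C.
    2: { unfold X. rewrite (S_INR (S k)), RtoC_plus. reflexivity. }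
    ring.
Qed.

Lemma INR_pow_pred : forall r m, INR m * r ^ (pred m) * r = INR m * r ^ m.
Proof. intros r [|k]; simpl; ring. Qed.

Lemma Ed_bound : forall y z r, 0 < r -> Cmod y <= r -> Cmod z <= r -> forall m,
  r^2 * Cmod (Ed y z m) <= INR m ^ 2 * r ^ m * Cmod (y - z)%C ^ 2.
Proof.
  intros y z r Hr Hy Hz m. induction m.
  - unfold Ed. simpl. replace (1 - 1 - 0 * 1 * (y - z))%C with (RtoC 0) by ring.
    rewrite Cmod_0. lra.
  - rewrite Ed_rec.
    set (d := Cmod (y - z)%C) in *.
    assert (Hd : 0 <= d) by apply Cmod_ge_0.
    assert (H1 : Cmod (y * Ed y z m + INR m * z ^ pred m * (y - z) ^ 2)%C
             <= r * Cmod (Ed y z m) + INR m * r ^ pred m * d^2).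
    { eapply Rle_trans. apply Cmod_triangle.
      rewrite !Cmod_mult, !Cmod_pow, Cmod_R, Rabs_pos_eq by apply pos_INR.
      apply Rplus_le_compat.
      - apply Rmult_le_compat_r; auto using Cmod_ge_0.
      - apply Rmult_le_compat_r. apply pow_le; auto.
        apply Rmult_le_compat_l. apply pos_INR.
        apply pow_incr. split; auto using Cmod_ge_0. }
    assert (H2 := INR_pow_pred r m).
    assert (Hm : 0 <= INR m) by apply pos_INR.
    assert (Hrm : 0 <= r ^ m) by (apply pow_le; lra).
    assert (HE : 0 <= Cmod (Ed y z m)) by apply Cmod_ge_0.
    assert (Hrp : 0 <= r ^ pred m) by (apply pow_le; lra).
    rewrite S_INR. simpl pow.
    apply Rle_trans with (r^2 * (r * Cmod (Ed y z m) + INR m * r ^ pred m * d ^ 2)).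
    { apply Rmult_le_compat_l; [nra|exact H1]. }
    assert (E1 : r ^ 2 * (INR m * r ^ pred m * d ^ 2) = r * (INR m * r^m) * d^2).
    { rewrite <- H2. ring. }
    assert (E2 : r^2 * (r * Cmod (Ed y z m) + INR m * r ^ pred m * d ^ 2)
                 = r * (r^2 * Cmod (Ed y z m)) + r * (INR m * r^m) * d^2).
    { rewrite <- E1. ring. }
    rewrite E2.
    assert (H3 : r * (r^2 * Cmod (Ed y z m)) <= r * (INR m ^ 2 * r ^ m * d ^ 2)).
    { apply Rmult_le_compat_l; lra. }
    assert (HA : 0 <= r * (r^m * d^2) * (INR m + 1)).
    { apply Rmult_le_pos; [apply Rmult_le_pos; [lra|apply Rmult_le_pos; [lra|apply pow2_ge_0]]|lra]. }
    apply Rle_trans with (r * (INR m ^ 2 * r ^ m * d ^ 2) + r * (INR m * r ^ m) * d ^ 2); [lra|].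
    apply Rminus_le. simpl pow. ring_simplify. simpl pow in HA. ring_simplify in HA. nra.
Qed.

Lemma deriv_series : forall (f : C -> C) (c : nat -> C) (rho B : R),
  0 < rho < 1 -> (forall n, Cmod (c n) * rho ^ n <= B) ->
  (forall z, Cmod z < rho -> is_series (fun n => (c n * z ^ n)%C) (f z)) ->
  forall z, Cmod z < rho ->
  is_series (fun n => (INR n * c n * z ^ n)%C) (z * C_derive f z)%C.
Proof.
  intros f c rho B Hrho Hc Hf z Hz.
  set (r := (Cmod z + rho) / 2).
  assert (Hz0 := Cmod_ge_0 z).
  assert (Hr : 0 < r < rho) by (unfold r; lra).
  assert (Hzr : Cmod z < r) by (unfold r; lra).
  set (q := r / rho).
  assert (Hq : 0 <= q < 1).
  { unfold q. split. apply Rlt_le, Rdiv_lt_0_compat; lra.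
    apply Rmult_lt_reg_r with rho; [lra|]. unfold Rdiv. rewrite Rmult_assoc, Rinv_l; lra. }
  destruct (poly_geom q Hq) as [K [t [HK [Ht HKt]]]].
  assert (HB : 0 <= B).
  { specialize (Hc 0%nat). simpl in Hc. generalize (Cmod_ge_0 (c 0%nat)). lra. }
  assert (Hcr : forall n, Cmod (c n) * r ^ n <= B * q ^ n).
  { intro n. replace r with (rho * q) by (unfold q; field; lra).
    rewrite Rpow_mult_distr, <- Rmult_assoc. apply Rmult_le_compat_r; auto.
    apply pow_le; lra. }
  assert (Hcr2 : forall n, INR n ^ 2 * (Cmod (c n) * r ^ n) <= B * K * t ^ n).
  { intro n. apply Rle_trans with (INR n ^2 * (B * q^n)).
    apply Rmult_le_compat_l; [apply pow2_ge_0| auto].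
    apply Rle_trans with (B * ((INR n + 1)^2 * q^n)).
    assert (0 <= q^n) by (apply pow_le; lra). assert (0 <= INR n) by apply pos_INR.
    assert (0 <= B * q^n) by (apply Rmult_le_pos; lra). nra.
    rewrite Rmult_assoc. apply Rmult_le_compat_l; auto. }
  assert (HKt' : forall n, 0 <= t ^ n) by (intro; apply pow_le; lra).
  set (d := fun n => (INR (S n) * c (S n) * z ^ n)%C).
  assert (Hd : forall n, Cmod (d n) <= (B * K / r) * t ^ n).
  { intro n. unfold d.
    rewrite !Cmod_mult, Cmod_pow, Cmod_R, Rabs_pos_eq by apply pos_INR.
    assert (H1 : INR (S n) * Cmod (c (S n)) * Cmod z ^ n <= INR (S n) * Cmod (c (S n)) * r ^ n).
    { apply Rmult_le_compat_l. apply Rmult_le_pos; [apply pos_INR| apply Cmod_ge_0].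
      apply pow_incr; lra. }
    assert (H2 : r * (INR (S n) * Cmod (c (S n)) * r ^ n) <= B * K * t ^ n).
    { assert (Hs1 : 1 <= INR (S n)) by (rewrite S_INR; generalize (pos_INR n); lra).
      assert (Hc0 : 0 <= Cmod (c (S n)) * r ^ S n) by (apply Rmult_le_pos; [apply Cmod_ge_0|apply pow_le; lra]).
      apply Rle_trans with (INR (S n) ^ 2 * (Cmod (c (S n)) * r ^ S n)).
      { replace (r * (INR (S n) * Cmod (c (S n)) * r ^ n)) with (INR (S n) * (Cmod (c (S n)) * r ^ S n)) by (simpl; ring).
        apply Rmult_le_compat_r; auto. replace (INR (S n) ^ 2) with (INR (S n) * INR (S n)) by ring. nra. }
      eapply Rle_trans. apply Hcr2. apply Rmult_le_compat_l. apply Rmult_le_pos; auto.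
      simpl. specialize (HKt' n). nra. }
    apply Rle_trans with (1 := H1).
    apply Rmult_le_reg_l with r; [lra|].
    replace (r * (B * K / r * t ^ n)) with (B * K * t ^ n) by (field; lra). exact H2. }
  assert (Hex : ex_series d).
  { apply (ex_series_le d (fun n => B * K / r * t ^ n)).
    intro n. apply Hd.
    apply (ex_series_scal (V := R_NormedModule) (B * K / r) (fun n => t ^ n)).
    apply ex_series_geom. rewrite Rabs_pos_eq; lra. }
  destruct Hex as [D HD].
  assert (Hder : is_derive f z D).
  { split. apply is_linear_scal_l.
    intros x Hx. apply (is_filter_lim_locally_unique (K:=C_AbsRing) (V:=AbsRing_NormedModule C_AbsRing)) in Hx. subst x.
    intros eps.
    apply (locally_le_locally_norm (K:=C_AbsRing) (V:=AbsRing_NormedModule C_AbsRing) z).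
    assert (Ht1 : 0 < 1 - t) by lra.
    set (L := B * K / (r ^ 2 * (1 - t)) + 1).
    assert (HL0 : 0 <= B * K / (r ^ 2 * (1 - t))).
    { apply Rmult_le_pos. apply Rmult_le_pos; lra.
      left; apply Rinv_0_lt_compat. apply Rmult_lt_0_compat; [nra|lra]. }
    assert (HL : 0 < L) by (unfold L; lra).
    assert (Hdl : 0 < Rmin (r - Cmod z) (eps / L)).
    { apply Rmin_pos. lra. apply Rdiv_lt_0_compat; [apply cond_pos|lra]. }
    exists (mkposreal _ Hdl). intros y Hy. unfold ball_norm in Hy; simpl in Hy.
    change (norm (minus y z)) with (Cmod (y - z)%C) in Hy |- *.
    change (norm (minus (minus (f y) (f z)) (scal (minus y z) D)))
      with (Cmod (f y - f z - (y - z) * D)%C).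
    set (dd := Cmod (y - z)%C) in *.
    assert (Hdd0 : 0 <= dd) by apply Cmod_ge_0.
    assert (Hdd1 : dd < r - Cmod z) by (generalize (Rmin_l (r - Cmod z) (eps / L)); lra).
    assert (Hdd2 : dd < eps / L) by (generalize (Rmin_r (r - Cmod z) (eps / L)); lra).
    assert (Hy1 : Cmod y < r).
    { replace y with (z + (y - z))%C by ring.
      eapply Rle_lt_trans. apply Cmod_triangle. fold dd. lra. }
    assert (H1 := Hf y ltac:(lra)). assert (H2 := Hf z Hz).
    assert (H3 : is_series (fun m => (INR m * c m * z ^ (pred m) * (y - z))%C) ((y - z) * D)%C).
    { apply is_series_decr_1.
      match goal with |- is_series _ ?l => replace l with ((y - z) * D)%C end.
      2: { unfold plus, opp; simpl. ring. }
      eapply is_series_ext; [| exact (is_series_scal_l (y - z)%C d D HD)].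
      intro n. unfold d, scal; simpl. unfold mult; simpl. ring. }
    assert (H4 : is_series (fun m => (c m * Ed y z m)%C) (f y - f z - (y - z) * D)%C).
    { assert (H5 := is_series_minus _ _ _ _ (is_series_minus _ _ _ _ H1 H2) H3).
      eapply is_series_ext; [| exact H5].
      intro n. unfold Ed, plus, opp; simpl. ring. }
    set (Q := B * K * dd ^ 2 / r ^ 2).
    assert (HQ : is_series (fun m => Q * t ^ m) (Q / (1 - t))).
    { assert (H6 := is_series_scal_l (V := R_NormedModule) Q _ _ (is_series_geom t ltac:(rewrite Rabs_pos_eq; lra))).
      eapply is_series_ext; [| exact H6]. intro; reflexivity. }
    assert (Hb : forall m, Cmod (c m * Ed y z m)%C <= Q * t ^ m).
    { intro m. rewrite Cmod_mult.
      assert (HE := Ed_bound y z r ltac:(lra) ltac:(lra) ltac:(lra) m).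
      fold dd in HE.
      assert (Hc2 := Hcr2 m).
      assert (Hcm := Cmod_ge_0 (c m)).
      unfold Q. apply Rmult_le_reg_l with (r ^ 2); [nra|].
      replace (r ^ 2 * (B * K * dd ^ 2 / r ^ 2 * t ^ m)) with (B * K * t ^ m * dd ^ 2) by (field; lra).
      replace (r ^ 2 * (Cmod (c m) * Cmod (Ed y z m))) with (Cmod (c m) * (r ^ 2 * Cmod (Ed y z m))) by ring.
      apply Rle_trans with (Cmod (c m) * (INR m ^ 2 * r ^ m * dd ^ 2)).
      apply Rmult_le_compat_l; auto.
      replace (Cmod (c m) * (INR m ^ 2 * r ^ m * dd ^ 2)) with ((INR m ^ 2 * (Cmod (c m) * r ^ m)) * dd ^ 2) by ring.
      apply Rmult_le_compat_r; auto. apply pow2_ge_0. }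
    assert (Hfin := series_norm_le _ _ _ _ H4 HQ Hb).
    eapply Rle_trans; [exact Hfin|].
    assert (E1 : Q / (1 - t) = (B * K / (r ^ 2 * (1 - t))) * dd * dd) by (unfold Q; field; split; lra).
    rewrite E1.
    assert (HLd : L * dd <= eps).
    { apply Rlt_le. apply Rmult_lt_reg_r with (/ L). apply Rinv_0_lt_compat; lra.
      replace (L * dd * / L) with dd by (field; lra). exact Hdd2. }
    assert (B * K / (r ^ 2 * (1 - t)) * dd <= L * dd) by (unfold L; nra).
    nra. }
  rewrite (is_C_derive_unique f z D Hder).
  apply is_series_decr_1.
  match goal with |- is_series _ ?l => replace l with (z * D)%C end.
  2: { unfold plus, opp; simpl. ring. }
  eapply is_series_ext; [| exact (is_series_scal_l z d D HD)].
  intro n. unfold d, scal; simpl. unfold mult; simpl. ring.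
Qed.

Definition cis (t : R) : C := (cos t, sin t).

Lemma cis_pow : forall t j, (cis t ^ j)%C = cis (INR j * t).
Proof.
  intros t j. induction j.
  - simpl. unfold cis. rewrite Rmult_0_l, cos_0, sin_0. reflexivity.
  - simpl Cpow. rewrite IHj. rewrite S_INR. unfold cis, Cmult. simpl. replace ((INR j + 1) * t) with (t + INR j * t) by ring.
    rewrite cos_plus, sin_plus. f_equal; ring.
Qed.

Lemma Cmod_cis : forall t, Cmod (cis t) = 1.
Proof.
  intro t. unfold Cmod, cis, fst, snd.
  replace (cos t ^ 2 + sin t ^ 2) with 1. apply sqrt_1.
  rewrite <- (sin2_cos2 t). unfold Rsqr. ring.
Qed.

Lemma Cpow_add : forall (x : C) a b, (x ^ (a + b) = x ^ a * x ^ b)%C.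
Proof. intros x a b. induction a; simpl. ring. rewrite IHa. ring. Qed.

Lemma Cpow_mul : forall (x : C) a b, (x ^ (a * b) = (x ^ a) ^ b)%C.
Proof.
  intros x a b. induction b.
  - rewrite Nat.mul_0_r. reflexivity.
  - replace (a * S b)%nat with (a + a * b)%nat by lia. rewrite Cpow_add, IHb. reflexivity.
Qed.

Lemma Cpow_comm : forall (x : C) a b, ((x ^ a) ^ b = (x ^ b) ^ a)%C.
Proof. intros. rewrite <- !Cpow_mul. f_equal. lia. Qed.

Lemma Cpow_mult_distr : forall (x y : C) k, ((x * y) ^ k = x ^ k * y ^ k)%C.
Proof. intros x y k. induction k; simpl. ring. rewrite IHk. ring. Qed.

Definition om (P : nat) : C := cis (2 * PI / INR (S P)).

Lemma om_N : forall P, (om P ^ (S P) = 1)%C.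
Proof.
  intro P. unfold om. rewrite cis_pow. unfold cis.
  replace (INR (S P) * (2 * PI / INR (S P))) with (2 * PI).
  rewrite cos_2PI, sin_2PI. reflexivity.
  field. apply not_0_INR. lia.
Qed.

Lemma om_ne1 : forall P j, (0 < j <= P)%nat -> (om P ^ j <> 1)%C.
Proof.
  intros P j Hj E. unfold om in E. rewrite cis_pow in E. unfold cis in E.
  apply (f_equal fst) in E. change (cos (INR j * (2 * PI / INR (S P))) = 1) in E.
  set (th := INR j * (2 * PI / INR (S P))) in E.
  assert (HN : 0 < INR (S P)) by (apply lt_0_INR; lia).
  assert (Hj1 : 0 < INR j) by (apply lt_0_INR; lia).
  assert (Hj2 : INR j < INR (S P)) by (apply lt_INR; lia).
  assert (HP := PI_RGT_0).
  assert (Hth0 : 0 < th).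
  { unfold th. apply Rmult_lt_0_compat; auto. apply Rdiv_lt_0_compat; lra. }
  assert (Hth1 : th < 2 * PI).
  { unfold th. apply Rmult_lt_reg_r with (INR (S P)); auto.
    replace (INR j * (2 * PI / INR (S P)) * INR (S P)) with (INR j * (2 * PI)) by (field; lra).
    nra. }
  destruct (Rle_lt_dec th PI).
  - assert (cos th < cos 0) by (apply cos_decreasing_1; lra).
    rewrite cos_0 in H. lra.
  - assert (cos th < cos (2 * PI)) by (apply cos_increasing_1; lra).
    rewrite cos_2PI in H. lra.
Qed.

Lemma Cmod_om : forall P, Cmod (om P) = 1.
Proof. intro P. apply Cmod_cis. Qed.

Lemma om_conj : forall P, (om P * Cconj (om P) = 1)%C.
Proof. intro P. rewrite <- Cmod2_conj, (Cmod_om P). simpl. f_equal. ring. Qed.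

Lemma om_pow_inj : forall P n m, (n <= P)%nat -> (m <= P)%nat -> (om P ^ n = om P ^ m)%C -> n = m.
Proof.
  intro P.
  assert (Hnz : om P <> 0%C).
  { intro E. generalize (Cmod_om P). rewrite E, Cmod_0. lra. }
  assert (K : forall n m, (m < n <= P)%nat -> (om P ^ n = om P ^ m)%C -> False).
  { intros n m Hnm E.
    replace n with (m + (n - m))%nat in E by lia. rewrite Cpow_add in E.
    apply (om_ne1 P (n - m)); [lia|].
    assert (Hm : (om P ^ m <> 0)%C) by (apply Cpow_nz; auto).
    replace (om P ^ (n - m))%C with (/ om P ^ m * (om P ^ m * om P ^ (n - m)))%C by (field; auto).
    rewrite E. field; auto. }
  intros n m Hn Hm E. destruct (Nat.lt_total n m) as [H|[H|H]]; auto.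
  - exfalso. apply (K m n); [lia| auto].
  - exfalso. apply (K n m); [lia| auto].
Qed.

Ltac cring := match goal with |- ?a = ?b => change (@eq C a b); ring end.

Lemma sumC_mult_l : forall (x : C) (a : nat -> C) P,
  (x * sum_n a P)%C = sum_n (fun k => x * a k)%C P.
Proof.
  intros x a P. induction P.
  - rewrite !sum_O. reflexivity.
  - rewrite !sum_Sn, <- IHP. unfold plus; simpl. ring.
Qed.

Lemma sumC_prod : forall (a b : nat -> C) P Q,
  (sum_n a P * sum_n b Q)%C = sum_n (fun n => sum_n (fun m => a n * b m)%C Q) P.
Proof.
  intros a b P Q. induction P.
  - rewrite !sum_O. apply sumC_mult_l.
  - rewrite !sum_Sn, <- IHP, <- sumC_mult_l. unfold plus; simpl. ring.
Qed.

Lemma sumC_conj : forall (a : nat -> C) P, Cconj (sum_n a P) = sum_n (fun k => Cconj (a k)) P.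
Proof.
  intros a P. induction P.
  - rewrite !sum_O. reflexivity.
  - rewrite !sum_Sn, <- IHP. unfold plus; simpl. apply Cplus_conj.
Qed.

Lemma sumC_RtoC : forall (x : nat -> R) P, sum_n (fun k => RtoC (x k)) P = RtoC (sum_n x P).
Proof.
  intros x P. induction P.
  - rewrite !sum_O. reflexivity.
  - rewrite !sum_Sn, IHP. unfold plus; simpl. rewrite RtoC_plus. reflexivity.
Qed.

Lemma sumC_geom : forall (z : C) P, ((1 - z) * sum_n (fun k => z ^ k) P = 1 - z ^ (S P))%C.
Proof.
  intros z P. induction P.
  - rewrite sum_O. simpl. ring.
  - rewrite sum_Sn. unfold plus; simpl.
    replace ((1 - z) * (sum_n (fun k => z ^ k) P + z * z ^ P))%C
      with ((1 - z) * sum_n (fun k => z ^ k) P + (1 - z) * (z * z ^ P))%C by ring.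
    rewrite IHP. simpl. ring.
Qed.

Lemma sumC_one : forall P, sum_n (fun k : nat => (1 ^ k)%C) P = RtoC (INR (S P)).
Proof.
  intros P. induction P.
  - rewrite sum_O. simpl. reflexivity.
  - rewrite sum_Sn, IHP. rewrite (S_INR (S P)), RtoC_plus, Cpow_1_l. reflexivity.
Qed.

Lemma sumC_zero : forall (g : nat -> C) Q, (forall m, (m <= Q)%nat -> g m = RtoC 0) -> sum_n g Q = RtoC 0.
Proof.
  intros g Q H. induction Q.
  - rewrite sum_O. apply H. lia.
  - rewrite sum_Sn, IHQ. rewrite H by lia. unfold plus; simpl. cring. intros; apply H; lia.
Qed.

Lemma sumC_kron : forall (x : C) n P, (n <= P)%nat ->
  sum_n (fun m => if Nat.eq_dec n m then x else RtoC 0) P = x.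
Proof.
  intros x n P Hn. induction P.
  - rewrite sum_O. destruct (Nat.eq_dec n 0); [reflexivity| lia].
  - rewrite sum_Sn.
    destruct (Nat.eq_dec n (S P)) as [E|E].
    + subst n. rewrite sumC_zero.
      destruct (Nat.eq_dec (S P) (S P)); [|lia]. unfold plus; simpl. cring.
      intros m Hm. destruct (Nat.eq_dec (S P) m); [lia|reflexivity].
    + rewrite IHP by lia. destruct (Nat.eq_dec n (S P)); [lia|]. unfold plus; simpl. cring.
Qed.

Lemma RtoC_inj' : forall x y : R, RtoC x = RtoC y -> x = y.
Proof. intros x y H. apply (f_equal fst) in H. exact H. Qed.


Lemma inner_sum : forall P n m, (n <= P)%nat -> (m <= P)%nat ->
  sum_n (fun k => ((om P ^ n * Cconj (om P) ^ m) ^ k)%C) P =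
  if Nat.eq_dec n m then RtoC (INR (S P)) else RtoC 0.
Proof.
  intros P n m Hn Hm.
  set (l := Cconj (om P)). set (w := om P).
  assert (Hwl : (w * l = 1)%C) by apply om_conj.
  destruct (Nat.eq_dec n m) as [E|E].
  - subst m. rewrite <- Cpow_mult_distr, Hwl, Cpow_1_l. apply sumC_one.
  - set (z := (w ^ n * l ^ m)%C).
    assert (HzN : (z ^ S P = 1)%C).
    { unfold z. rewrite Cpow_mult_distr, (Cpow_comm w), (Cpow_comm l).
      unfold l. rewrite <- Cpow_conj. unfold w. rewrite om_N.
      rewrite Cpow_1_l. replace (Cconj 1) with (RtoC 1).
      rewrite Cpow_1_l. ring. unfold Cconj, RtoC; simpl. f_equal. ring. }
    assert (Hz1 : z <> 1%C).
    { intro Hz. apply E. apply (om_pow_inj P); auto.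
      fold w. replace (w ^ n)%C with (z * w ^ m)%C.
      rewrite Hz. ring. unfold z.
      replace (w ^ n * l ^ m * w ^ m)%C with (w ^ n * (w * l) ^ m)%C.
      rewrite Hwl, Cpow_1_l. ring. rewrite Cpow_mult_distr. ring. }
    assert (H := sumC_geom z P). rewrite HzN in H.
    replace (1 - 1)%C with (RtoC 0) in H by ring.
    assert (Hnz : (1 - z <> RtoC 0)%C).
    { intro H0. apply Hz1. replace z with (1 - (1 - z))%C by ring. rewrite H0. ring. }
    replace (sum_n (fun k => (z ^ k)%C) P) with (/ (1 - z) * ((1 - z) * sum_n (fun k => (z ^ k)%C) P))%C
      by (match goal with |- ?a = ?b => change (@eq C a b) end; field; auto).
    rewrite H. cring.
Qed.

Lemma parseval : forall P (U : nat -> C),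
  sum_n (fun k => Cmod (sum_n (fun n => (U n * ((om P) ^ k) ^ n)%C) P) ^ 2) P
  = INR (S P) * sum_n (fun n => Cmod (U n) ^ 2) P.
Proof.
  intros P U. apply RtoC_inj'.
  rewrite <- sumC_RtoC, RtoC_mult, <- sumC_RtoC.
  transitivity (sum_n (fun k => sum_n (fun n => sum_n (fun m => (U n * Cconj (U m) * (om P ^n * Cconj (om P) ^m)^k)%C) P) P) P).
  { apply sum_n_ext. intro k. rewrite Cmod2_conj. rewrite sumC_conj, sumC_prod.
    apply sum_n_ext; intro n. apply sum_n_ext; intro m.
    rewrite Cmult_conj, Cpow_conj, Cpow_conj.
    rewrite Cpow_mult_distr, (Cpow_comm (om P) k n), (Cpow_comm (Cconj (om P)) k m). cring. }
  rewrite sum_n_switch.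
  transitivity (sum_n (fun n => (U n * Cconj (U n) * RtoC (INR (S P)))%C) P).
  { apply sum_n_ext_loc. intros n Hn. rewrite sum_n_switch.
    rewrite <- (sumC_kron (U n * Cconj (U n) * RtoC (INR (S P)))%C n P Hn).
    apply sum_n_ext_loc. intros m Hm.
    rewrite <- sumC_mult_l, inner_sum by auto.
    destruct (Nat.eq_dec n m) as [E|E]. subst m. cring. cring. }
  rewrite sumC_mult_l. apply sum_n_ext. intro n. rewrite Cmod2_conj. cring.
Qed.


Lemma sumR_le : forall (x y : nat -> R) P, (forall k, (k <= P)%nat -> x k <= y k) ->
  sum_n x P <= sum_n y P.
Proof.
  intros x y P H. induction P.
  - rewrite !sum_O. apply H; lia.
  - rewrite !sum_Sn. unfold plus; simpl.
    assert (sum_n x P <= sum_n y P) by (apply IHP; intros; apply H; lia).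
    specialize (H (S P) (le_n _)). lra.
Qed.

Lemma sumR_lin : forall (x y : nat -> R) a b P,
  sum_n (fun n => a * x n + b * y n) P = a * sum_n x P + b * sum_n y P.
Proof.
  intros x y a b P. induction P.
  - rewrite !sum_O. reflexivity.
  - rewrite !sum_Sn, IHP. unfold plus; simpl. ring.
Qed.

Lemma sumR_const : forall (c : R) P, sum_n (fun _ => c) P = INR (S P) * c.
Proof. intros. apply sum_n_const. Qed.

Lemma discrete_ineq : forall (U V : nat -> C) P M e A,
  0 <= M -> 0 <= e ->
  (forall k, (k <= P)%nat ->
     Cmod (sum_n (fun n => (U n * ((om P) ^ k) ^ n)%C) P)
     <= M * Cmod (sum_n (fun n => (V n * ((om P) ^ k) ^ n)%C) P) + e) ->
  (forall k, (k <= P)%nat -> Cmod (sum_n (fun n => (V n * ((om P) ^ k) ^ n)%C) P) <= A) ->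
  sum_n (fun n => 1 * (Cmod (U n) ^ 2) + (- M ^ 2) * (Cmod (V n) ^ 2)) P <= 2 * M * e * A + e ^ 2.
Proof.
  intros U V P M e A HM He HGU HGV.
  set (GU := fun k => Cmod (sum_n (fun n => (U n * ((om P) ^ k) ^ n)%C) P)).
  set (GV := fun k => Cmod (sum_n (fun n => (V n * ((om P) ^ k) ^ n)%C) P)).
  assert (H1 : sum_n (fun k => GU k ^ 2) P <=
               sum_n (fun k => M ^ 2 * GV k ^ 2 + 1 * (2 * M * e * A + e ^ 2)) P).
  { apply sumR_le. intros k Hk. unfold GU, GV.
    specialize (HGU k Hk). specialize (HGV k Hk).
    set (a := Cmod (sum_n (fun n => (U n * ((om P) ^ k) ^ n)%C) P)) in *.
    set (b := Cmod (sum_n (fun n => (V n * ((om P) ^ k) ^ n)%C) P)) in *.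
    assert (0 <= a) by apply Cmod_ge_0. assert (0 <= b) by apply Cmod_ge_0.
    assert (a ^ 2 <= (M * b + e) ^ 2) by (simpl; nra).
    assert (M * e * b <= M * e * A) by (apply Rmult_le_compat_l; [nra|lra]).
    nra. }
  unfold GU, GV in H1.
  rewrite parseval in H1.
  rewrite (sumR_lin (fun k => Cmod (sum_n (fun n => (V n * ((om P) ^ k) ^ n)%C) P) ^ 2) (fun _ => 2 * M * e * A + e ^ 2)) in H1.
  rewrite parseval, sumR_const in H1.
  rewrite sumR_lin.
  assert (HN : 0 < INR (S P)) by (apply lt_0_INR; lia).
  apply Rmult_le_reg_l with (INR (S P)); auto.
  nra.
Qed.

Lemma geom_partial : forall t P, 0 <= t < 1 -> sum_n (fun n => t ^ n) P <= 1 / (1 - t).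
Proof.
  intros t P Ht.
  assert (E : sum_n (fun n => t ^ n) P * (1 - t) = 1 - t ^ (S P)).
  { induction P. rewrite sum_O. simpl. ring.
    rewrite sum_Sn. unfold plus; simpl.
    replace ((sum_n (fun n => t ^ n) P + t * t ^ P) * (1 - t)) with
      (sum_n (fun n => t ^ n) P * (1 - t) + t * t ^ P * (1 - t)) by ring.
    rewrite IHP. simpl. ring. }
  assert (0 <= t ^ S P) by (apply pow_le; lra).
  apply Rmult_le_reg_r with (1 - t); [lra|].
  rewrite E. replace (1 / (1 - t) * (1 - t)) with 1 by (field; lra). lra.
Qed.

Lemma sumR_scal : forall (x : nat -> R) a P, sum_n (fun n => a * x n) P = a * sum_n x P.
Proof.
  intros x a P. induction P. rewrite !sum_O; reflexivity.
  rewrite !sum_Sn, IHP. unfold plus; simpl. ring.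
Qed.

Lemma partial_bound : forall (X : nat -> C) (w : C) Q t P,
  Cmod w <= 1 -> 0 <= t < 1 -> (forall n, Cmod (X n) <= Q * t ^ n) ->
  Cmod (sum_n (fun n => (X n * w ^ n)%C) P) <= Q / (1 - t).
Proof.
  intros X w Q t P Hw Ht HX.
  assert (HQ : 0 <= Q).
  { specialize (HX 0%nat). simpl in HX. generalize (Cmod_ge_0 (X 0%nat)). lra. }
  eapply Rle_trans. apply (norm_sum_le _ (fun n => Q * t ^ n)).
  { intro n. rewrite Cmod_mult, Cmod_pow.
    assert (0 <= Cmod w ^ n <= 1) by (split; [apply pow_le, Cmod_ge_0| apply pow_le1; split; [apply Cmod_ge_0|lra]]).
    assert (0 <= Cmod (X n)) by apply Cmod_ge_0.
    specialize (HX n). nra. }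
  rewrite sumR_scal. 
  assert (H := geom_partial t P Ht).
  unfold Rdiv. rewrite <- (Rmult_1_l (/ (1 - t))).
  replace (Q * (1 * / (1 - t))) with (Q * (1 / (1 - t))) by (unfold Rdiv; ring).
  apply Rmult_le_compat_l; auto.
Qed.

Lemma tail_bound : forall (X : nat -> C) (w L : C) Q t P,
  Cmod w <= 1 -> 0 <= t < 1 -> (forall n, Cmod (X n) <= Q * t ^ n) ->
  is_series (fun n => (X n * w ^ n)%C) L ->
  Cmod (L - sum_n (fun n => (X n * w ^ n)%C) P)%C <= Q * t ^ (S P) / (1 - t).
Proof.
  intros X w L Q t P Hw Ht HX HL.
  set (a := fun n => (X n * w ^ n)%C) in *.
  assert (H1 : is_series (fun k => a (S P + k)%nat) (L - sum_n a P)%C).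
  { apply is_series_incr_n. lia. simpl pred.
    match goal with |- is_series _ ?l => replace l with L end. exact HL.
    unfold plus; simpl. match goal with |- ?x = ?y => change (@eq C x y) end. change (@sum_n (NormedModule.AbelianMonoid C_AbsRing C_NormedModule) a P) with (@sum_n C_AbelianMonoid a P). ring. }
  assert (H2 : is_series (fun k => Q * t ^ (S P) * t ^ k) (Q * t ^ (S P) / (1 - t))).
  { assert (H6 := is_series_scal_l (V := R_NormedModule) (Q * t ^ (S P)) _ _ (is_series_geom t ltac:(rewrite Rabs_pos_eq; lra))).
    eapply is_series_ext; [| exact H6]. intro; reflexivity. }
  apply (series_norm_le _ _ _ _ H1 H2).
  intro k. unfold a. rewrite Cmod_mult, Cmod_pow.
  assert (0 <= Cmod w ^ (S P + k) <= 1) by (split; [apply pow_le, Cmod_ge_0| apply pow_le1; split; [apply Cmod_ge_0|lra]]).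
  assert (0 <= Cmod (X (S P + k)%nat)) by apply Cmod_ge_0.
  specialize (HX (S P + k)%nat). rewrite pow_add in HX.
  rewrite Rmult_assoc. nra.
Qed.

Definition Mc := 2 / cos 1.

Lemma Cmod_U : forall (c : C) (r : R) n, 0 <= r ->
  Cmod (INR n * c * RtoC r ^ n)%C = INR n * Cmod c * r ^ n.
Proof.
  intros c r n Hr. rewrite !Cmod_mult, Cmod_pow, !Cmod_R, !Rabs_pos_eq; auto. apply pos_INR.
Qed.

Lemma Cmod_V : forall (c : C) (r : R) n, 0 <= r ->
  Cmod (c * RtoC r ^ n)%C = Cmod c * r ^ n.
Proof.
  intros c r n Hr. rewrite !Cmod_mult, Cmod_pow, !Cmod_R, !Rabs_pos_eq; auto.
Qed.

Lemma per_r : forall (f : C -> C) (a : nat -> C), S_star_nc f ->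
  (forall z : C, inD z ->
     is_series (fun n : nat => (a (n + 2)%nat * z ^ (n + 2))%C) (f z - z)%C) ->
  forall r, 0 < r < 1 -> exists C0 t, 0 <= C0 /\ 0 <= t < 1 /\ forall P,
    sum_n (fun n => (INR n ^ 2 - Mc ^ 2) * Cmod (cf a n) ^ 2 * (r ^ n) ^ 2) P <= C0 * t ^ (S P).
Proof.
  intros f a Hs H r Hr.
  assert (Hf := f_series f a H).
  set (rho := (1 + r) / 2).
  assert (Hrho : 0 < rho < 1) by (unfold rho; lra).
  destruct (coef_bound f a Hf rho ltac:(lra)) as [B HB].
  assert (Hf' : forall z, Cmod z < rho -> is_series (fun n => (cf a n * z ^ n)%C) (f z)).
  { intros z Hz. apply Hf. unfold inD. lra. }
  set (q := r / rho).
  assert (Hq : 0 <= q < 1).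
  { unfold q. split. apply Rlt_le, Rdiv_lt_0_compat; lra.
    apply Rmult_lt_reg_r with rho; [lra|]. unfold Rdiv. rewrite Rmult_assoc, Rinv_l; unfold rho; lra. }
  destruct (poly_geom q Hq) as [K [t [HK [Ht HKt]]]].
  assert (HB0 : 0 <= B).
  { specialize (HB 0%nat). rewrite pow_O, Rmult_1_r in HB. generalize (Cmod_ge_0 (cf a 0%nat)). lra. }
  set (Q := B * K).
  set (U := fun n => (INR n * cf a n * RtoC r ^ n)%C).
  set (V := fun n => (cf a n * RtoC r ^ n)%C).
  assert (Hcr : forall n, Cmod (cf a n) * r ^ n <= B * q ^ n).
  { intro n. replace r with (rho * q) by (unfold q; field; lra).
    rewrite Rpow_mult_distr, <- Rmult_assoc. apply Rmult_le_compat_r; auto.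
    apply pow_le; lra. }
  assert (HU : forall n, Cmod (U n) <= Q * t ^ n).
  { intro n. unfold U. rewrite Cmod_U by lra.
    specialize (Hcr n). specialize (HKt n).
    assert (0 <= INR n) by apply pos_INR.
    assert (0 <= Cmod (cf a n) * r ^ n) by (apply Rmult_le_pos; [apply Cmod_ge_0|apply pow_le; lra]).
    assert (0 <= q ^ n) by (apply pow_le; lra).
    apply Rle_trans with ((INR n + 1) ^ 2 * (Cmod (cf a n) * r ^ n)).
    { rewrite Rmult_assoc. apply Rmult_le_compat_r; auto. nra. }
    apply Rle_trans with ((INR n + 1) ^ 2 * (B * q ^ n)).
    { apply Rmult_le_compat_l; auto. apply pow2_ge_0. }
    unfold Q. replace ((INR n + 1) ^ 2 * (B * q ^ n)) with (B * ((INR n + 1) ^ 2 * q ^ n)) by ring.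
    rewrite Rmult_assoc. apply Rmult_le_compat_l; auto. }
  assert (HV : forall n, Cmod (V n) <= Q * t ^ n).
  { intro n. unfold V. rewrite Cmod_V by lra.
    specialize (Hcr n). specialize (HKt n).
    assert (0 <= INR n) by apply pos_INR.
    assert (0 <= q ^ n) by (apply pow_le; lra).
    apply Rle_trans with (B * q ^ n); auto.
    unfold Q. rewrite Rmult_assoc. apply Rmult_le_compat_l; auto.
    assert (1 <= (INR n + 1) ^ 2) by (simpl; nra). nra. }
  assert (HM : 0 <= Mc).
  { unfold Mc. apply Rlt_le, Rdiv_lt_0_compat. lra. apply cos1_pos. }
  assert (Ht1 : 0 < 1 - t) by lra.
  assert (HQ : 0 <= Q) by (unfold Q; apply Rmult_le_pos; auto).
  set (A := Q / (1 - t)).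
  set (C1 := (Mc + 1) * Q / (1 - t)).
  assert (HA : 0 <= A) by (unfold A; apply Rmult_le_pos; auto; left; apply Rinv_0_lt_compat; lra).
  assert (HC1 : 0 <= C1).
  { unfold C1. apply Rmult_le_pos. apply Rmult_le_pos; lra. left; apply Rinv_0_lt_compat; lra. }
  exists (2 * Mc * A * C1 + C1 ^ 2), t. split; [|split; [lra|]].
  { assert (0 <= Mc * A * C1) by (apply Rmult_le_pos; [apply Rmult_le_pos|]; auto).
    assert (0 <= C1 ^ 2) by apply pow2_ge_0. lra. }
  intro P.
  set (s := t ^ (S P)).
  assert (Hs0 : 0 <= s <= 1) by (unfold s; split; [apply pow_le; lra| apply pow_le1; lra]).
  set (e := C1 * s).
  assert (He : 0 <= e) by (unfold e; apply Rmult_le_pos; lra).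
  assert (Hmain := discrete_ineq U V P Mc e A HM He).
  assert (Hw : forall k, Cmod ((om P) ^ k)%C = 1).
  { intro k. rewrite Cmod_pow, Cmod_om. apply pow1. }
  assert (HGV : forall k, (k <= P)%nat ->
     Cmod (sum_n (fun n => (V n * ((om P) ^ k) ^ n)%C) P) <= A).
  { intros k Hk. apply (partial_bound V _ Q t P); auto. rewrite Hw; lra. }
  assert (HGU : forall k, (k <= P)%nat ->
     Cmod (sum_n (fun n => (U n * ((om P) ^ k) ^ n)%C) P)
     <= Mc * Cmod (sum_n (fun n => (V n * ((om P) ^ k) ^ n)%C) P) + e).
  { intros k Hk.
    set (w := ((om P) ^ k)%C).
    set (zeta := (RtoC r * w)%C).
    assert (Hz : Cmod zeta = r).
    { unfold zeta. rewrite Cmod_mult, Cmod_R, Rabs_pos_eq by lra. unfold w. rewrite Hw. ring. }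
    assert (Hzr : Cmod zeta < rho) by (rewrite Hz; unfold rho; lra).
    assert (Hg := deriv_series f (cf a) rho B Hrho HB Hf' zeta Hzr).
    assert (Hh := Hf' zeta Hzr).
    assert (Hpow : forall n, (zeta ^ n = RtoC r ^ n * w ^ n)%C).
    { intro n. unfold zeta. apply Cpow_mult_distr. }
    assert (Hg' : is_series (fun n => (U n * w ^ n)%C) (zeta * C_derive f zeta)%C).
    { eapply is_series_ext; [| exact Hg]. intro n. simpl. rewrite Hpow. unfold U. ring. }
    assert (Hh' : is_series (fun n => (V n * w ^ n)%C) (f zeta)).
    { eapply is_series_ext; [| exact Hh]. intro n. simpl. rewrite Hpow. unfold V. ring. }
    assert (Hw1 : Cmod w <= 1) by (unfold w; rewrite Hw; lra).
    assert (T1 := tail_bound U w _ Q t P Hw1 Ht HU Hg').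
    assert (T2 := tail_bound V w _ Q t P Hw1 Ht HV Hh').
    assert (Hzf : Cmod (zeta * C_derive f zeta)%C <= Mc * Cmod (f zeta)).
    { apply zf_bound; auto. unfold inD. lra.
      intro E. rewrite E, Cmod_0 in Hz. lra. }
    set (GU := sum_n (fun n => (U n * w ^ n)%C) P) in *.
    set (GV := sum_n (fun n => (V n * w ^ n)%C) P) in *.
    set (g := (zeta * C_derive f zeta)%C) in *.
    assert (E1 : Cmod GU <= Cmod g + Cmod (g - GU)%C).
    { replace GU with (g - (g - GU))%C at 1 by ring.
      eapply Rle_trans. apply Cmod_triangle. rewrite Cmod_opp. lra. }
    assert (E2 : Cmod (f zeta) <= Cmod GV + Cmod (f zeta - GV)%C).
    { replace (f zeta) with (GV + (f zeta - GV))%C at 1 by ring. apply Cmod_triangle. }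
    assert (Ee : Q * t ^ S P / (1 - t) * (Mc + 1) = e).
    { unfold e, C1, s. field. lra. }
    nra. }
  specialize (Hmain HGU HGV).
  assert (Herr : 2 * Mc * e * A + e ^ 2 <= (2 * Mc * A * C1 + C1 ^ 2) * s).
  { unfold e. assert (0 <= Mc * A * C1 * s) by (apply Rmult_le_pos; [apply Rmult_le_pos; [apply Rmult_le_pos|]|]; lra).
    assert (C1 ^ 2 * s * s <= C1 ^ 2 * s).
    { assert (0 <= C1 ^ 2) by apply pow2_ge_0. 
      rewrite Rmult_assoc. apply Rmult_le_compat_l; auto. nra. }
    simpl. simpl in H1. nra. }
  eapply Rle_trans; [| exact Herr].
  eapply Rle_trans; [| exact Hmain].
  right. apply sum_n_ext. intro n. unfold U, V.
  rewrite Cmod_U, Cmod_V by lra. match goal with |- ?x = ?y => change (@eq R x y) end. ring.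
Qed.

Lemma Mc_sq : Mc ^ 2 <= 16.
Proof.
  unfold Mc. assert (H := cos1_ge_half). assert (H0 := cos1_pos).
  assert (2 / cos 1 <= 4).
  { apply Rmult_le_reg_r with (cos 1); auto. unfold Rdiv. rewrite Rmult_assoc, Rinv_l by lra. lra. }
  assert (0 <= 2 / cos 1) by (apply Rlt_le, Rdiv_lt_0_compat; lra).
  simpl. nra.
Qed.

Lemma sum_mono : forall (x : nat -> R) P0 P, (forall n, (P0 < n)%nat -> 0 <= x n) -> (P0 <= P)%nat ->
  sum_n x P0 <= sum_n x P.
Proof.
  intros x P0 P Hx HP. induction P.
  - replace P0 with 0%nat by lia. lra.
  - destruct (Nat.eq_dec P0 (S P)) as [->|Hne]. lra.
    rewrite sum_Sn. unfold plus; simpl. specialize (IHP ltac:(lia)). specialize (Hx (S P) ltac:(lia)). lra.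
Qed.

Definition alpha (a : nat -> C) (n : nat) : R := (INR n ^ 2 - Mc ^ 2) * Cmod (cf a n) ^ 2.

Lemma alpha_nonneg : forall a n, (4 <= n)%nat -> 0 <= alpha a n.
Proof.
  intros a n Hn. unfold alpha. apply Rmult_le_pos; [|apply pow2_ge_0].
  assert (4 <= INR n) by (replace 4 with (INR 4) by (simpl; ring); apply le_INR; lia).
  generalize Mc_sq. simpl. nra.
Qed.

Lemma fixed_r : forall (f : C -> C) (a : nat -> C), S_star_nc f ->
  (forall z : C, inD z ->
     is_series (fun n : nat => (a (n + 2)%nat * z ^ (n + 2))%C) (f z - z)%C) ->
  forall r, 0 < r < 1 -> forall P0, (3 <= P0)%nat ->
  sum_n (fun n => alpha a n * (r ^ n) ^ 2) P0 <= 0.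
Proof.
  intros f a Hs H r Hr P0 HP0.
  destruct (per_r f a Hs H r Hr) as [C0 [t [HC0 [Ht HP]]]].
  apply Rnot_lt_le. intro HX.
  set (X := sum_n (fun n => alpha a n * (r ^ n) ^ 2) P0) in *.
  destruct (pow_lt_1_zero t ltac:(rewrite Rabs_pos_eq; lra) (X / (C0 + 1)) ltac:(apply Rdiv_lt_0_compat; lra))
    as [N HN].
  set (P := max P0 N).
  assert (H1 : X <= sum_n (fun n => alpha a n * (r ^ n) ^ 2) P).
  { apply sum_mono; [|unfold P; lia]. intros n Hn.
    apply Rmult_le_pos. apply alpha_nonneg; lia. apply pow2_ge_0. }
  assert (H2 := HP P).
  assert (H3 : sum_n (fun n => alpha a n * (r ^ n) ^ 2) P = sum_n (fun n => (INR n ^ 2 - Mc ^ 2) * Cmod (cf a n) ^ 2 * (r ^ n) ^ 2) P).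
  { apply sum_n_ext. intro n. reflexivity. }
  specialize (HN (S P) ltac:(unfold P; lia)). rewrite Rabs_pos_eq in HN by (apply pow_le; lra).
  assert (C0 * t ^ S P <= C0 * (X / (C0 + 1))) by (apply Rmult_le_compat_l; lra).
  assert (C0 * (X / (C0 + 1)) < X).
  { apply Rmult_lt_reg_r with (C0 + 1); [lra|].
    replace (C0 * (X / (C0 + 1)) * (C0 + 1)) with (C0 * X) by (field; lra). nra. }
  lra.
Qed.

Lemma at_one : forall (f : C -> C) (a : nat -> C), S_star_nc f ->
  (forall z : C, inD z ->
     is_series (fun n : nat => (a (n + 2)%nat * z ^ (n + 2))%C) (f z - z)%C) ->
  forall P0, (3 <= P0)%nat -> sum_n (alpha a) P0 <= 0.
Proof.
  intros f a Hs H P0 HP0.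
  set (Lc := sum_n (fun n => Rabs (alpha a n) * INR (n * 2)) P0).
  assert (HLc : 0 <= Lc).
  { apply Rle_trans with (sum_n (fun _ => 0) P0).
    rewrite sumR_const. lra.
    apply sumR_le. intros. apply Rmult_le_pos. apply Rabs_pos. apply pos_INR. }
  assert (Hdiff : forall r, 0 <= r <= 1 ->
    sum_n (alpha a) P0 - sum_n (fun n => alpha a n * (r ^ n) ^ 2) P0 <= Lc * (1 - r)).
  { intros r Hr.
    rewrite <- (Rmult_1_l (sum_n (alpha a) P0)).
    replace (1 * sum_n (alpha a) P0 - sum_n (fun n => alpha a n * (r ^ n) ^ 2) P0)
      with (1 * sum_n (alpha a) P0 + (-1) * sum_n (fun n => alpha a n * (r ^ n) ^ 2) P0) by ring.
    rewrite <- sumR_lin. unfold Lc. rewrite Rmult_comm, <- sumR_scal.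
    apply sumR_le. intros n Hn.
    assert (Hp : 0 <= 1 - (r ^ n) ^ 2 <= INR (n * 2) * (1 - r)).
    { rewrite <- pow_mult. split.
      - assert (r ^ (n * 2) <= 1) by (apply pow_le1; lra). lra.
      - apply one_minus_pow; lra. }
    assert (alpha a n * (1 - (r ^ n) ^ 2) <= Rabs (alpha a n) * (1 - (r ^ n) ^ 2)).
    { apply Rmult_le_compat_r. lra. apply Rle_abs. }
    assert (Rabs (alpha a n) * (1 - (r ^ n) ^ 2) <= Rabs (alpha a n) * (INR (n * 2) * (1 - r))).
    { apply Rmult_le_compat_l. apply Rabs_pos. lra. }
    nra. }
  apply Rnot_lt_le. intro HX.
  set (X := sum_n (alpha a) P0) in *.
  set (r := Rmax (1/2) (1 - X / (2 * (Lc + 1)))).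
  assert (Hq : 0 < X / (2 * (Lc + 1))) by (apply Rdiv_lt_0_compat; lra).
  assert (Hr1 : 1/2 <= r) by apply Rmax_l.
  assert (Hr2 : 1 - X / (2 * (Lc + 1)) <= r) by apply Rmax_r.
  assert (Hr3 : r < 1) by (unfold r; apply Rmax_lub_lt; lra).
  assert (H1 := fixed_r f a Hs H r ltac:(lra) P0 HP0).
  assert (H2 := Hdiff r ltac:(lra)).
  assert (H3 : Lc * (1 - r) <= Lc * (X / (2 * (Lc + 1)))) by (apply Rmult_le_compat_l; lra).
  assert (H4 : Lc * (X / (2 * (Lc + 1))) < X).
  { apply Rmult_lt_reg_r with (2 * (Lc + 1)); [lra|].
    replace (Lc * (X / (2 * (Lc + 1))) * (2 * (Lc + 1))) with (Lc * X) by (field; lra). nra. }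
  lra.
Qed.

Lemma sum_shift2 : forall (x : nat -> R) N,
  sum_n (fun n => x (n + 2)%nat) N = sum_n x (N + 2) - x 0%nat - x 1%nat.
Proof.
  intros x N. induction N.
  - rewrite sum_O. replace (0 + 2)%nat with 2%nat by lia. rewrite !sum_Sn, sum_O. unfold plus; simpl. match goal with |- ?x = ?y => change (@eq R x y) end. ring.
  - rewrite sum_Sn, IHN. replace (S N + 2)%nat with (S (N + 2)) by lia.
    rewrite (sum_Sn x (N + 2)). unfold plus; simpl. match goal with |- ?x = ?y => change (@eq R x y) end. ring.
Qed.

Theorem mainTheorem3 (f : C -> C) (a : nat -> C) :
  S_star_nc f ->
  (forall z : C, inD z ->
     is_series (fun n : nat => (a (n + 2)%nat * z ^ (n + 2))%C) (f z - z)%C) ->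
  exists s : R,
    is_series (fun n : nat =>
      (INR (n + 2) ^ 2 * (cos 1) ^ 2 - 4) * (Cmod (a (n + 2)%nat)) ^ 2) s /\
    s <= 4 - (cos 1) ^ 2.
Proof.
  intros Hs H.
  set (kc := cos 1).
  assert (Hk := cos1_ge_half). fold kc in Hk.
  assert (Hk0 := cos1_pos). fold kc in Hk0.
  set (beta := fun n => (INR n ^ 2 * kc ^ 2 - 4) * Cmod (cf a n) ^ 2).
  assert (Hb : forall P0, (3 <= P0)%nat -> sum_n beta P0 <= 0).
  { intros P0 HP0. assert (H1 := at_one f a Hs H P0 HP0).
    assert (E : forall n, beta n = kc ^ 2 * alpha a n).
    { intro n. unfold beta, alpha, Mc. fold kc. field. lra. }
    rewrite (sum_n_ext _ _ P0 E), sumR_scal.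
    assert (0 <= kc ^ 2) by apply pow2_ge_0. nra. }
  set (tt := fun n : nat => (INR (n + 2) ^ 2 * (cos 1) ^ 2 - 4) * (Cmod (a (n + 2)%nat)) ^ 2).
  assert (Ett : forall n, tt n = beta (n + 2)%nat).
  { intro n. unfold tt, beta. fold kc. replace (n + 2)%nat with (S (S n)) by lia. reflexivity. }
  assert (Hsum : forall N, sum_n tt N = sum_n beta (N + 2) - (kc ^ 2 - 4)).
  { intro N. rewrite (sum_n_ext _ _ N Ett), (sum_shift2 beta N).
    unfold beta. simpl cf. rewrite Cmod_0, Cmod_1. simpl. ring. }
  set (S' := fun N => sum_n tt (N + 1)).
  assert (Hbound : forall N, S' N <= 4 - kc ^ 2).
  { intro N. unfold S'. rewrite Hsum. assert (Hb' := Hb (N + 1 + 2)%nat ltac:(lia)). lra. }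
  assert (Hincr : forall N, S' N <= S' (S N)).
  { intro N. unfold S'. replace (S N + 1)%nat with (S (N + 1)) by lia.
    rewrite sum_Sn. unfold plus; simpl.
    assert (0 <= tt (S (N + 1))).
    { unfold tt. fold kc. apply Rmult_le_pos; [|apply pow2_ge_0].
      assert (4 <= INR (S (N + 1) + 2)) by (replace 4 with (INR 4) by (simpl; ring); apply le_INR; lia).
      assert (2 <= INR (S (N + 1) + 2) * kc) by nra. replace (INR (S (N + 1) + 2) ^ 2 * kc ^ 2) with ((INR (S (N + 1) + 2) * kc) ^ 2) by ring. nra. }
    lra. }
  destruct (ex_finite_lim_seq_incr S' (4 - kc ^ 2) Hincr Hbound) as [l Hl].
  exists l. split.
  - apply (is_lim_seq_incr_n (sum_n tt) 1 l) in Hl. exact Hl.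
  - assert (Hle := is_lim_seq_le S' (fun _ => 4 - kc ^ 2) l (4 - kc ^ 2) Hbound Hl (is_lim_seq_const _)).
    simpl in Hle. exact Hle.
Qed.
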